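(* Let $n$ be a nonnegative integer and $0<\pi<1$. Let $T$ be the random variable with probability mass function $$P(T=t)=\sum_{k=0}^n \#\mathcal{P}_{k,n-k}(t)\,(1-\pi)^{n-k}\pi^k,\qquad t=0,1,\dots,\lfloor n^2/4\rfloor,$$ and $0$ otherwise. Then $$E(T)=\binom{n}{2}\pi(1-\pi),\qquad E(T^2)=\binom{n}{2}\pi(1-\pi)\left(\frac{2n-1}{3}+\binom{n-2}{2}\pi(1-\pi)\right),$$ and consequently $$V(T)=\binom{n}{2}\pi(1-\pi)\left(\frac{2n-1}{3}-\pi(1-\pi)(2n-3)\right).$$
   Context: For integers $k\ge0$ and $m$, $\#\mathcal{P}_{k,m}(t)$ denotes the number of integer tuples $(\lambda_1,\dots,\lambda_k)$ with $m\ge\lambda_1\ge\cdots\ge\lambda_k\ge0$ and $\lambda_1+\cdots+\lambda_k=t$. Interpretation: in $n$ independent Bernoulli trials each with success probability $\pi$, $T$ is the total, over all successes, of the number of failures occurring after that success (the number of pairs (success, later failure)). Binomial coefficients $\binom{a}{b}$ with $b>a\ge0$ or $b<0$ are $0$. *)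

(* Defs.v *)
From mathcomp Require Import all_boot all_order all_algebra.
Set Implicit Arguments. Unset Strict Implicit. Unset Printing Implicit Defensive.
Import Order.TTheory GRing.Theory Num.Theory.

(* #P_{k,m}(t): number of integer tuples (l_1,...,l_k) with
   m >= l_1 >= ... >= l_k >= 0 and l_1 + ... + l_k = t.
   Entries are taken in 'I_(m.+1), i.e. 0 <= l_i <= m. *)
Definition nPart (k m t : nat) : nat :=
  #|[set l : k.-tuple 'I_m.+1 |
      sorted (fun x y : nat => y <= x) (map val (tval l))
      && ((\sum_(x <- tval l) (x : nat)) == t)]|.

Local Open Scope ring_scope.

Definition pmfT (R : realFieldType) (n : nat) (pi : R) (t : nat) : R :=
  if (t <= n ^ 2 %/ 4)%N then
    \sum_(0 <= k < n.+1) (nPart k (n - k) t)%:R * (1 - pi) ^+ (n - k) * pi ^+ k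
  else 0.

(* E(T^j) = sum_t t^j P(T = t); the support is contained in 0 .. floor(n^2/4). *)
Definition momentT (R : realFieldType) (n : nat) (pi : R) (j : nat) : R :=
  \sum_(0 <= t < (n ^ 2 %/ 4).+1) (t%:R) ^+ j * pmfT n pi t.

(* Main.v *)
Require Import Defs.
From mathcomp Require Import all_boot all_order all_algebra.
From mathcomp Require Import zify ring lra.
Import Order.TTheory GRing.Theory Num.Theory.
Set Implicit Arguments. Unset Strict Implicit. Unset Printing Implicit Defensive.

Definition tsum k b (P : seq nat -> bool) : nat :=
  \sum_(l : k.-tuple 'I_b) (P (map val (tval l)) : nat).

Lemma tsum0 b P : tsum 0 b P = P [::].
Proof.
rewrite /tsum (big_pred1 [tuple]) //= => l.
by rewrite [l]tuple0; apply/eqP.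
Qed.

Lemma tsum_cons k b P :
  tsum k.+1 b P = \sum_(x < b) tsum k b (fun s => P (val x :: s)).
Proof.
rewrite /tsum.
rewrite (reindex (fun p : 'I_b * k.-tuple 'I_b => [tuple of p.1 :: p.2])) /=.
  rewrite -(pair_big xpredT xpredT (fun (x : 'I_b) (l : k.-tuple 'I_b) => (P (map val (tval [tuple of x :: l])) : nat))) /=.
  by [].
exists (fun u => (thead u, [tuple of behead u])) => u _ /=.
  by case: u => x l; rewrite theadE; congr pair; apply: val_inj.
by rewrite [in RHS](tuple_eta u).
Qed.

Lemma tsum_ext k b P Q : (forall s, P s = Q s) -> tsum k b P = tsum k b Q.
Proof. by move=> h; apply: eq_bigr => l _; rewrite h. Qed.

Lemma tsum_false k b : tsum k b (fun _ => false) = 0.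
Proof. by rewrite /tsum big1. Qed.

Lemma tsum_restrict k b c P : c <= b ->
  tsum k b (fun s => all (fun y => y < c) s && P s) = tsum k c P.
Proof.
move=> hcb; elim: k P => [|k IH] P; first by rewrite !tsum0.
rewrite !tsum_cons.
rewrite (eq_bigr (fun x : 'I_b => if val x < c then tsum k c (fun s => P (val x :: s)) else 0)); last first.
  move=> x _.
  rewrite (@tsum_ext _ _ _ (fun s => all (fun y => y < c) s && ((val x < c) && P (val x :: s)))); last first.
    by move=> s /=; case: (val x < c); rewrite /= ?andbF.
  rewrite IH; case: ifP => hx //.
  by rewrite (@tsum_ext _ _ _ (fun _ => false)) ?tsum_false.
rewrite -big_mkcond /=.
rewrite (big_ord_widen b (fun x => tsum k c (fun s => P (x :: s))) hcb).
by [].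
Qed.

Fixpoint G k m t : nat :=
  if k is k'.+1 then \sum_(y < m.+1) (y <= t) * G k' y (t - y) else (t == 0 : nat).

Definition Pk t := fun s : seq nat => sorted (fun x y : nat => y <= x) s && (sumn s == t).

Lemma addn_eq_sub x u t : (x + u == t) = (x <= t) && (u == t - x).
Proof. by case: leqP => h /=; [apply/eqP/eqP => ?; lia | apply/eqP; lia]. Qed.

Lemma tsum_G k m t : tsum k m.+1 (Pk t) = G k m t.
Proof.
elim: k m t => [|k IH] m t; first by rewrite tsum0 /Pk /= eq_sym.
rewrite tsum_cons /=; apply: eq_bigr => x _.
rewrite (@tsum_ext _ _ _ (fun s => all (fun y => y < (val x).+1) s && ((val x <= t) && Pk (t - val x) s))); last first.
  move=> s; rewrite /Pk /= path_sortedE; last by move=> a b c h1 h2; apply: leq_trans h2 h1.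
  rewrite addn_eq_sub.
  have -> : all (fun y => y <= val x) s = all (fun y => y < (val x).+1) s by apply: eq_all => y.
  by case: (all _ s); case: (_ <= t); case: (sorted _ s).
rewrite (@tsum_restrict k m.+1 (val x).+1 (fun s => (val x <= t) && Pk (t - val x) s)); last exact: ltn_ord x.
case: leqP => h; rewrite ?h ?mul1n ?mul0n.
  by rewrite (@tsum_ext _ _ _ (Pk (t - val x))) ?IH.
by rewrite (@tsum_ext _ _ _ (fun _ => false)) ?tsum_false.
Qed.

Lemma nPart_G k m t : nPart k m t = G k m t.
Proof.
rewrite -tsum_G /nPart /tsum -sum1_card big_mkcond /=.
apply: eq_bigr => l _; rewrite inE /Pk sumnE big_map.
by case: ifP.
Qed.

Lemma G_k0 k t : G k 0 t = (t == 0).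
Proof. by elim: k t => [|k IH] t //=; rewrite big_ord1 /= mul1n subn0 IH. Qed.

Lemma G_rec k m t :
  G k.+1 m.+1 t = G k.+1 m t + (m.+1 <= t) * G k m.+1 (t - m.+1).
Proof. by rewrite /= big_ord_recr. Qed.

Lemma G_vanish k m t : k * m < t -> G k m t = 0.
Proof.
elim: k m t => [|k IH] m t /=; first by case: t.
move=> h; rewrite big1 // => y _.
rewrite IH ?muln0 //.
have hy : (y <= m)%N by rewrite -ltnS.
have : (k * y <= k * m)%N by rewrite leq_mul2l hy orbT.
lia.
Qed.

Local Open Scope ring_scope.

Definition S (R : realFieldType) (h : nat -> R) k m : R :=
  \sum_(0 <= t < (k * m).+1) h t * (G k m t)%:R.

Lemma S_ext (R : realFieldType) (h : nat -> R) k m B : (k * m < B)%N ->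
  \sum_(0 <= t < B) h t * (G k m t)%:R = S h k m.
Proof.
move=> hB; rewrite /S (big_cat_nat _ (n := (k * m).+1)) //=.
rewrite [X in _ + X]big1_seq ?addr0 // => t /andP[_].
rewrite mem_index_iota => /andP[h1 _].
by rewrite G_vanish ?mulr0.
Qed.

Lemma S_0m (R : realFieldType) (h : nat -> R) m : S h 0 m = h 0%N.
Proof. by rewrite /S mul0n big_nat1 /= mulr1. Qed.

Lemma S_k0 (R : realFieldType) (h : nat -> R) k : S h k 0 = h 0%N.
Proof. by rewrite /S muln0 big_nat1 G_k0 /= mulr1. Qed.

Lemma S_rec (R : realFieldType) (h : nat -> R) k m :
  S h k.+1 m.+1 = S h k.+1 m + S (fun s => h (s + m.+1)%N) k m.+1.
Proof.
rewrite {1}/S.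
under eq_bigr do rewrite G_rec natrD mulrDr.
rewrite big_split S_ext; last by rewrite ltnS leq_mul2l leqnSn orbT.
congr (_ + _).
rewrite (big_cat_nat _ (n := m.+1)) //=; last by rewrite mulSn; lia.
rewrite big1_seq ?add0r; last first.
  move=> t /andP[_]; rewrite mem_index_iota => /andP[_ h1].
  by rewrite leqNgt h1 mul0n mulr0.
rewrite -{1}(add0n m.+1) big_addn.
under eq_bigr do rewrite leq_addl mul1n addnK.
apply: S_ext.
rewrite mulSn; lia.
Qed.

Definition E (R : realFieldType) (p q : R) n (f : nat -> nat -> R) : R :=
  \sum_(0 <= k < n.+1) p ^+ k * q ^+ (n - k) * S (f k) k (n - k).

Lemma E_succ (R : realFieldType) (p q : R) n f :
  E p q n.+1 f = q * E p q n f + p * E p q n (fun k t => f k.+1 (t + (n - k))%N).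
Proof.
rewrite /E big_nat_recl // big_nat_recr //.
rewrite [X in _ = q * X + _]big_nat_recl // [X in _ = _ + p * X]big_nat_recr //.
rewrite !subn0 !subnn !S_0m !S_k0 !expr0 !mulr1 !mul1r addn0.
set A := \sum_(0 <= i < n) _.
set B := \sum_(0 <= i < n) _.
set C := \sum_(0 <= i < n) _.
have h3 : A = q * B + p * C.
  rewrite /A /B /C !mulr_sumr -big_split; apply: eq_big_nat => k /andP[_ hk].
  rewrite subSS.
  have e : (n - k = (n - k.+1).+1)%N by lia.
  rewrite e S_rec mulrDr !exprS /=; ring.
rewrite h3 !exprS /=; ring.
Qed.

Lemma E_ext (R : realFieldType) (p q : R) n f g :
  (forall k t, (k <= n)%N -> f k t = g k t) -> E p q n f = E p q n g.
Proof.
move=> h; apply: eq_big_nat => k /andP[_ hk]; rewrite /S.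
by congr (_ * _); apply: eq_bigr => t _; rewrite h.
Qed.

Lemma E_poly (R : realFieldType) (p q : R) n (a0 a1 a2 a3 a4 a5 : R) :
  E p q n (fun k t => a0 + a1 * k%:R + a2 * k%:R ^+ 2 + a3 * t%:R
                      + a4 * (t%:R * k%:R) + a5 * t%:R ^+ 2) =
  a0 * E p q n (fun _ _ => 1) + a1 * E p q n (fun k _ => k%:R)
  + a2 * E p q n (fun k _ => k%:R ^+ 2) + a3 * E p q n (fun _ t => t%:R)
  + a4 * E p q n (fun k t => t%:R * k%:R) + a5 * E p q n (fun _ t => t%:R ^+ 2).
Proof.
rewrite /E /S !mulr_sumr -!big_split /=; apply: eq_big_nat => k _.
rewrite !mulr_sumr -!big_split /=; apply: eq_bigr => t _.
ring.
Qed.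

Lemma two_neq0 (R : realFieldType) : (2 : R) != 0.
Proof. by rewrite pnatr_eq0. Qed.
Lemma three_neq0 (R : realFieldType) : (3 : R) != 0.
Proof. by rewrite pnatr_eq0. Qed.

Lemma moments (R : realFieldType) (p : R) n :
  let q := 1 - p in
  let N : R := n%:R in
  (E p q n (fun _ _ => 1) = 1) /\
      (E p q n (fun k _ => k%:R) = N * p) /\
      (E p q n (fun k _ => k%:R ^+ 2) = N * p + N * (N - 1) * p ^+ 2) /\
      (E p q n (fun _ t => t%:R) = N * (N - 1) / 2 * p * q) /\
      (E p q n (fun k t => t%:R * k%:R) = N * (N - 1) / 2 * p * q * (1 + (N - 2) * p)) /\
    (E p q n (fun _ t => t%:R ^+ 2) =
        N * (N - 1) / 2 * p * q * ((2 * N - 1) / 3 + (N - 2) * (N - 3) / 2 * p * q)).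
Proof.
move=> q N; rewrite /N {N}.
elim: n => [|n [h1 [h2 [h3 [h4 [h5 h6]]]]]].
  rewrite /E !big_nat1 !S_0m /=.
  (repeat split); rewrite ?expr0 ?mul1r ?mulr1 //; ring.
have hs : forall k t, (k <= n)%N -> ((t + (n - k))%:R : R) = t%:R + n%:R - k%:R.
  by move=> k t hk; rewrite natrD natrB // addrA.
rewrite -natr1.
(repeat split); rewrite E_succ.
- rewrite [X in _ + p * X = _](@E_ext R p q n _ (fun k t => 1 + 0 * k%:R + 0 * k%:R ^+ 2 + 0 * t%:R
                      + 0 * (t%:R * k%:R) + 0 * t%:R ^+ 2)); last by move=> k t hk /=; ring.
  rewrite E_poly h1 h2 h3 h4 h5 h6 /q; ring.
- rewrite [X in _ + p * X = _](@E_ext R p q n _ (fun k t => 1 + 1 * k%:R + 0 * k%:R ^+ 2 + 0 * t%:R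
                      + 0 * (t%:R * k%:R) + 0 * t%:R ^+ 2)); last by move=> k t hk /=; rewrite -natr1; ring.
  rewrite E_poly h1 h2 h3 h4 h5 h6 /q; ring.
- rewrite [X in _ + p * X = _](@E_ext R p q n _ (fun k t => 1 + 2 * k%:R + 1 * k%:R ^+ 2 + 0 * t%:R
                      + 0 * (t%:R * k%:R) + 0 * t%:R ^+ 2)); last by move=> k t hk /=; rewrite -natr1; ring.
  rewrite E_poly h1 h2 h3 h4 h5 h6 /q; ring.
- rewrite [X in _ + p * X = _](@E_ext R p q n _ (fun k t => n%:R + (-1) * k%:R + 0 * k%:R ^+ 2 + 1 * t%:R
                      + 0 * (t%:R * k%:R) + 0 * t%:R ^+ 2)); last by move=> k t hk /=; rewrite hs //; ring.
  rewrite E_poly h1 h2 h3 h4 h5 h6 /q; by field; rewrite ?two_neq0 ?three_neq0.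
- rewrite [X in _ + p * X = _](@E_ext R p q n _ (fun k t => n%:R + (n%:R - 1) * k%:R + (-1) * k%:R ^+ 2 + 1 * t%:R
                      + 1 * (t%:R * k%:R) + 0 * t%:R ^+ 2)); last by move=> k t hk /=; rewrite hs // -natr1; ring.
  rewrite E_poly h1 h2 h3 h4 h5 h6 /q; by field; rewrite ?two_neq0 ?three_neq0.
- rewrite [X in _ + p * X = _](@E_ext R p q n _ (fun k t => n%:R ^+ 2 + (-2 * n%:R) * k%:R + 1 * k%:R ^+ 2 + (2 * n%:R) * t%:R
                      + (-2) * (t%:R * k%:R) + 1 * t%:R ^+ 2)); last by move=> k t hk /=; rewrite hs //; ring.
  rewrite E_poly h1 h2 h3 h4 h5 h6 /q; by field; rewrite ?two_neq0 ?three_neq0.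
Qed.

Lemma kmn_bound k n : (k <= n)%N -> (k * (n - k) < (n ^ 2 %/ 4).+1)%N.
Proof.
move=> hk; rewrite ltnS leq_divRL //.
have [a ->] : exists a, n = (k + a)%N by exists (n - k)%N; lia.
rewrite addKn.
case: (leqP k a) => h.
  have [d ->] : exists d, a = (k + d)%N by exists (a - k)%N; lia.
  nia.
have [d ->] : exists d, k = (a + d)%N by exists (k - a)%N; lia.
nia.
Qed.

Lemma momentT_E (R : realFieldType) (n : nat) (pi : R) j :
  momentT n pi j = E pi (1 - pi) n (fun _ t => t%:R ^+ j).
Proof.
rewrite /momentT.
transitivity (\sum_(0 <= t < (n ^ 2 %/ 4).+1) \sum_(0 <= k < n.+1)
   (pi ^+ k * (1 - pi) ^+ (n - k) * (t%:R ^+ j * (G k (n - k) t)%:R))).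
  apply: eq_big_nat => t /andP[_ ht]; rewrite ltnS in ht.
  rewrite /pmfT ht mulr_sumr; apply: eq_big_nat => k _.
  rewrite nPart_G; ring.
rewrite exchange_big /E; apply: eq_big_nat => k /andP[_ hk].
by rewrite -mulr_sumr S_ext // kmn_bound.
Qed.

Lemma binom2R (R : realFieldType) n : ('C(n, 2))%:R = n%:R * (n%:R - 1) / 2 :> R.
Proof.
elim: n => [|n IH]; first by rewrite bin0n mul0r mul0r.
rewrite binS bin1 natrD IH -natr1.
by field; rewrite ?two_neq0.
Qed.

Theorem theorem2 (R : realFieldType) (n : nat) (pi : R)
    (hpi0 : 0 < pi) (hpi1 : pi < 1) :
  let ET := momentT n pi 1 in
  let ET2 := momentT n pi 2 in
  [/\ ET = 'C(n, 2)%:R * pi * (1 - pi),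
      ET2 = 'C(n, 2)%:R * pi * (1 - pi) *
              ((2 * n%:R - 1) / 3 + 'C(n - 2, 2)%:R * pi * (1 - pi))
    & ET2 - ET ^+ 2 = 'C(n, 2)%:R * pi * (1 - pi) *
              ((2 * n%:R - 1) / 3 - pi * (1 - pi) * (2 * n%:R - 3))].
Proof.
move=> ET ET2.
have [_ [_ [_ [h4 [_ h6]]]]] := moments pi n.
have e1 : ET = n%:R * (n%:R - 1) / 2 * pi * (1 - pi).
  rewrite /ET momentT_E -h4; apply: E_ext => k t _; exact: expr1.
have e2 : ET2 = n%:R * (n%:R - 1) / 2 * pi * (1 - pi) *
        ((2 * n%:R - 1) / 3 + (n%:R - 2) * (n%:R - 3) / 2 * pi * (1 - pi)).
  by rewrite /ET2 momentT_E -h6.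
split.
- by rewrite e1 binom2R.
- rewrite e2 binom2R.
  case: n {ET ET2 e1 e2 h4 h6} => [|[|m]].
  + by rewrite /= !mul0r.
  + by rewrite /= subrr !mulr0 !mul0r.
  + rewrite !subSS subn0 binom2R -[m.+2]addn2 natrD.
    by field; rewrite ?two_neq0 ?three_neq0.
- rewrite e1 e2 binom2R.
  by field; rewrite ?two_neq0 ?three_neq0.
Qed.
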